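(* Let $M=(\alpha_{i,j})$ be a Griffiths positive $k\times k$ matrix of constant coefficient $(1,1)$-forms on $\mathbb{C}^n$ ($k\geqslant 2$) such that $\alpha_{1,1}=\omega:=\sum_{l=1}^n\frac{\sqrt{-1}}{2}dz_l\wedge d\overline{z_l}$ in complex linear coordinates $(z_1,\dots,z_n)$. Then there is $C\in GL_k(\mathbb{C})$ such that \[ C\cdot M\cdot C^H= \begin{pmatrix} \omega & \rho_{1,2} & \cdots & \rho_{1,k}\\ \overline{\rho_{1,2}} & \omega+\rho_{2,2} & \cdots & \rho_{2,k}\\ \vdots & \vdots & \ddots & \vdots\\ \overline{\rho_{1,k}} & \overline{\rho_{2,k}} & \cdots & \omega+\rho_{k,k} \end{pmatrix} \] with all $\rho_{i,j}\in P^{1,1}$. Moreover, one may in addition choose (after a change of complex linear coordinates in which $\omega$ keeps the form $\sum_l\frac{\sqrt{-1}}{2}dz_l\wedge d\overline{z_l}$) that $\rho_{2,2}=\sum_{l=1}^n b_{2,2}^{(l)}\frac{\sqrt{-1}}{2}dz_l\wedge d\overline{z_l}$ with $\sum_{l=1}^n b_{2,2}^{(l)}=0$ and $b_{2,2}^{(l)}>-1$ for each $1\leqslant l\leqslant n$.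
   Context: $V^{1,1}$ denotes the space of constant coefficient $(1,1)$-forms on $\mathbb{C}^n$. A $(1,1)$-form is Kähler if it equals $\sum_l\frac{\sqrt{-1}}{2}dw_l\wedge d\overline{w_l}$ in some complex linear coordinates. A $k\times k$ matrix $M=(\alpha_{i,j})$ of $(1,1)$-forms with $\alpha_{i,j}=\overline{\alpha_{j,i}}$ is Griffiths positive if $\sum_{i,j}\theta_i\alpha_{i,j}\overline{\theta_j}$ is Kähler for all $\theta\in\mathbb{C}^k\setminus\{0\}$. For $C=(c_{i,j})\in GL_k(\mathbb{C})$, $C\cdot M\cdot C^H$ is the matrix with entries $\sum_{a,b}c_{i,a}\alpha_{a,b}\overline{c_{j,b}}$. The primitive space is $P^{1,1}=\{\alpha\in V^{1,1}:\alpha\wedge\omega^{n-1}=0\}$. *)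

(* Defs.v *)
From HB Require Import structures.
From mathcomp Require Import all_boot all_order all_algebra.
From mathcomp Require Import complex.
From mathcomp Require Import reals.
Set Implicit Arguments. Unset Strict Implicit. Unset Printing Implicit Defensive.
Import Order.TTheory GRing.Theory Num.Theory.
Local Open Scope ring_scope.
Local Open Scope complex_scope.

(* A constant coefficient (1,1)-form on C^n, in the fixed complex linear
   coordinates (z_1,...,z_n),
       alpha = sum_{p,q} A p q * (sqrt(-1)/2) dz_p /\ d(conj z_q),
   is represented by its coefficient matrix A : 'M[R[i]]_n.  *)
Definition form11 (R : realType) (n : nat) := 'M[R[i]]_n.

Definition omega_form (R : realType) (n : nat) : form11 R n := 1%:M.

(* Complex conjugate of a (1,1)-form:
   conj(A_pq (i/2) dz_p/\dzbar_q) = conj(A_pq) (i/2) dz_q/\dzbar_p,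
   so the coefficient matrix becomes the conjugate transpose. *)
Definition form_conj (R : realType) (n : nat) (A : form11 R n) : form11 R n :=
  (map_mx (fun x => x^*) A)^T.

(* A change of complex linear coordinates w = P z (P invertible) gives
   dw_l = sum_p P l p dz_p, hence
   sum_l (i/2) dw_l /\ d(conj w_l) has coefficient matrix P^T * conj(P)
   in the z-coordinates.  [diag_in_coords P b] is the coefficient matrix (in
   z-coordinates) of  sum_l b_l (i/2) dw_l /\ d(conj w_l). *)
Definition diag_in_coords (R : realType) (n : nat) (P : 'M[R[i]]_n)
  (b : 'I_n -> R[i]) : form11 R n :=
  P^T *m diag_mx (\row_l b l) *m map_mx (fun x => x^*) P.

Definition is_kahler (R : realType) (n : nat) (A : form11 R n) : Prop :=
  exists P : 'M[R[i]]_n, P \in unitmx /\ A = diag_in_coords P (fun _ => 1).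

Definition formmx (R : realType) (n k : nat) := 'I_k -> 'I_k -> form11 R n.

Definition is_hermitian_formmx (R : realType) (n k : nat) (M : formmx R n k)
  : Prop := forall i j, M i j = form_conj (M j i).

Definition formmx_eval (R : realType) (n k : nat) (M : formmx R n k)
  (theta : 'I_k -> R[i]) : form11 R n :=
  \sum_(i < k) \sum_(j < k) (theta i * (theta j)^*) *: M i j.

Definition griffiths_positive (R : realType) (n k : nat) (M : formmx R n k)
  : Prop :=
  is_hermitian_formmx M /\
  forall theta : 'I_k -> R[i], (exists i, theta i != 0) ->
    is_kahler (formmx_eval M theta).

Definition congr_formmx (R : realType) (n k : nat) (C : 'M[R[i]]_k)
  (M : formmx R n k) : formmx R n k :=
  fun i j => \sum_(a < k) \sum_(b < k) (C i a * (C j b)^*) *: M a b.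

(* Top-degree coefficient of alpha /\ omega^(n-1) with respect to
   prod_l (i/2) dz_l /\ d(conj z_l): since (1,1)-forms commute and
   omega^(n-1) = (n-1)! sum_l prod_{m <> l} (i/2)dz_m/\dzbar_m, this is
   (n-1)! * sum_l A l l.  For n = 0 the wedge is the zero form. *)
Definition wedge_omega_top (R : realType) (n : nat) (A : form11 R n) : R[i] :=
  (n.-1)`!%:R * \tr A.

Definition is_primitive (R : realType) (n : nat) (A : form11 R n) : Prop :=
  wedge_omega_top A = 0.

(* Main.v *)
Require Import Defs.
From HB Require Import structures.
From mathcomp Require Import all_boot all_order all_algebra.
From mathcomp Require Import complex.
From mathcomp Require Import reals.
From mathcomp Require Import spectral sesquilinear ring lra.
Import Order.TTheory GRing.Theory Num.Theory.
Local Open Scope ring_scope.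

Section Gen.
Local Open Scope sesquilinear_scope.

Context {KK : numClosedFieldType}.

Lemma mx_expand m p q r (A : 'M[KK]_(m,p)) (B : 'M[KK]_(p,q)) (D : 'M[KK]_(r,q)) i j :
  (A *m B *m D^t*) i j = \sum_a \sum_b A i a * B a b * Num.conj (D j b).
Proof.
rewrite !mxE; under eq_bigr => b _ do rewrite !mxE mulr_suml.
by rewrite exchange_big.
Qed.

Definition pos {n} (A : 'M[KK]_n) :=
  forall w : 'rV_n, w != 0 -> 0 < (w *m A *m w^t*) 0 0.

Lemma diag1 n : diag_mx (\row_(l < n) (1 : KK)) = 1%:M.
Proof. by apply/matrixP => i j; rewrite !mxE. Qed.

Lemma kahler_pos n (Q : 'M[KK]_n) : Q \in unitmx -> pos (Q^T *m map_mx Num.conj Q).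
Proof.
move=> Qu w w0.
have -> : w *m (Q^T *m map_mx Num.conj Q) *m w^t* = (w *m Q^T) *m (w *m Q^T)^t*.
    by rewrite !trmx_mul !map_mxM !trmxK !mulmxA.
have := (@dotmx_is_dotmx KK n (w *m Q^T)); rewrite dotmxE; apply.
apply: contra w0 => /eqP h.
have : w *m Q^T *m invmx Q^T = 0 by rewrite h mul0mx.
by rewrite mulmxK ?unitmx_tr // => ->.
Qed.

Lemma conj_delta n (j : 'I_n) : ('e_j : 'rV[KK]_n)^t* = delta_mx j 0.
Proof.
apply/matrixP => a b; rewrite !mxE.
by case: (_ == _); case: (_ == _); rewrite /= ?rmorph1 ?rmorph0.
Qed.

Lemma diag_entry n (B : 'M[KK]_n) j : (('e_j : 'rV[KK]_n) *m B *m ('e_j : 'rV[KK]_n)^t*) 0 0 = B j j.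
Proof.
by rewrite conj_delta -rowE -colE !mxE.
Qed.


Lemma e_neq0 n (j : 'I_n) : ('e_j : 'rV[KK]_n) != 0.
Proof.
apply/eqP => /matrixP /(_ 0 j); rewrite !mxE !eqxx /= => /eqP.
by rewrite oner_eq0.
Qed.

Lemma pos_tr n (A : 'M[KK]_n) : (0 < n)%N -> pos A -> 0 < \tr A.
Proof.
move=> n0 pA; have hd : forall l, 0 < A l l.
  by move=> l; rewrite -diag_entry; apply: pA; apply: (@e_neq0 n).
rewrite /mxtrace (bigD1 (Ordinal n0)) //=; apply: ltr_wpDr => //.
by apply: sumr_ge0 => l _; apply: ltW.
Qed.

Lemma row_neq0_unitary n (P : 'M[KK]_n) j : P \is unitarymx -> row j P != 0.
Proof.
move=> /unitarymxP PU; apply/eqP => h.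
have : row j (P *m P^t*) = 0 by rewrite row_mul h mul0mx.
by rewrite PU row1 => /eqP; rewrite (negbTE (@e_neq0 n j)).
Qed.

Lemma spectral_pos n (A : 'M[KK]_n) : A^t* = A -> pos A ->
  exists P : 'M[KK]_n, exists d : 'rV[KK]_n,
    [/\ P \is unitarymx, A = P^t* *m diag_mx d *m P & forall j, 0 < d 0 j].
Proof.
move=> hA pA.
have nA : A \is normalmx by apply/normalmxP; rewrite hA.
have PU : spectralmx A \is unitarymx := spectral_unitarymx A.
have /orthomx_spectralP eA := nA.
rewrite invmx_unitary // in eA.
move: PU eA; set P := spectralmx A; set d := spectral_diag A => PU eA.
exists P, d; split => //.
move=> j.
have hD : P *m A *m P^t* = diag_mx d.
  rewrite [X in P *m X]eA !mulmxA (unitarymxP PU) mul1mx -mulmxA (unitarymxP PU).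
  by rewrite mulmx1.
have -> : d 0 j = diag_mx d j j.
  by rewrite !mxE eqxx mulr1n.
rewrite -hD -diag_entry.
have -> : ('e_j : 'rV[KK]_n) *m (P *m A *m P^t*)
   *m ('e_j : 'rV[KK]_n)^t* = row j P *m A *m (row j P)^t*.
  by rewrite rowE trmx_mul map_mxM !mulmxA.
by apply: pA; apply: row_neq0_unitary.
Qed.


Lemma unitary_tC n (S : 'M[KK]_n) : S \is unitarymx -> S^t* *m S = 1%:M.
Proof.
by rewrite -trmxC_unitary => /unitarymxP; rewrite trmxCK.
Qed.

Lemma chol k (T : 'M[KK]_k) (i0 : 'I_k) : val i0 = 0%N -> T^t* = T -> pos T ->
  exists Cm : 'M[KK]_k,
    [/\ Cm \in unitmx, Cm *m T *m Cm^t* = 1%:M & forall a, a != i0 -> Cm i0 a = 0].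
Proof.
move=> hi0 hT pT.
have [P [d [PU eT dpos]]] := @spectral_pos k T hT pT.
pose s := \row_j sqrtC (d 0 j).
have s_conj : forall j, Num.conj (s 0 j) = s 0 j.
  by move=> j; rewrite mxE geC0_conj // sqrtC_ge0 ltW.
have s_sq : forall j, s 0 j * s 0 j = d 0 j.
  by move=> j; rewrite mxE -expr2 sqrtCK.
have s_neq0 : forall j, s 0 j != 0.
  move=> j; apply/eqP => h; have := s_sq j; rewrite h mul0r => h0.
  by have := dpos j; rewrite -h0 ltxx.
pose Y := P^t* *m diag_mx s.
have sC : (diag_mx s)^t* = diag_mx s.
  apply/matrixP => a b; rewrite !mxE rmorphMn /=.
  have := s_conj b; rewrite mxE => ->.
  by case: eqP => [->|h]; rewrite ?eqxx // eq_sym; case: eqP => // /esym.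
have YY : Y *m Y^t* = T.
  rewrite /Y trmx_mul map_mxM trmxCK sC !mulmxA -[P^t* *m _ *m _]mulmxA mulmx_diag.
  rewrite eT; congr (_ *m _ *m _); apply/matrixP => a b; rewrite !mxE.
  case: eqP => // ->; have := s_sq b; rewrite mxE => ->; done.
have Yu : Y \in unitmx.
  pose s' := \row_j (s 0 j)^-1.
  have : Y *m (diag_mx s' *m P) = 1%:M.
    rewrite /Y !mulmxA -[P^t* *m _ *m _]mulmxA mulmx_diag.
    have -> : diag_mx (\row_j (s 0 j * s' 0 j)) = 1%:M.
      apply/matrixP => a b; rewrite !mxE; case: eqP => [->|]; last by rewrite mulr0n.
      by rewrite mulr1n divff //; have := s_neq0 b; rewrite mxE.
    by rewrite mulmx1 unitary_tC.
  by case/mulmx1_unit.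
pose S := schmidt Y.
have SU : S \is unitarymx by apply: schmidt_unitarymx.
have [c hc] : exists c, row i0 Y = c *: row i0 S.
  apply/sub_rVP.
  have := row_schmidt_sub Y i0.
  rewrite (big_pred1 i0); first by rewrite genmxE.
  move=> a /=; apply/idP/idP; last by move/eqP->.
  by rewrite hi0 leqn0 => /eqP h; apply/eqP/val_inj; rewrite /= h hi0.
pose X := Y *m S^t*.
have XX : X *m X^t* = T.
  rewrite /X trmx_mul map_mxM trmxCK !mulmxA -[Y *m _ *m S]mulmxA unitary_tC //.
  by rewrite mulmx1.
have Xu : X \in unitmx.
  by rewrite unitmx_mul Yu unitarymx_unit // trmxC_unitary.
exists (invmx X); split.
- by rewrite unitmx_inv.
- have -> : invmx X *m T *m (invmx X)^t* = (invmx X *m X) *m (invmx X *m X)^t*.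
    by rewrite -XX !trmx_mul !map_mxM !mulmxA.
  by rewrite mulVmx // trmx1 map_mx1 mulmx1.
- have hX : row i0 X = c *: 'e_i0.
    by rewrite /X row_mul hc -scalemxAl -row_mul (unitarymxP SU) row1.
  have h1 : c *: row i0 (invmx X) = 'e_i0.
    by rewrite rowE scalemxAl -hX -row_mul mulmxV // row1.
  have c0 : c != 0.
    apply/eqP => c0; move: h1; rewrite c0 scale0r => /esym /eqP.
    by rewrite (negbTE (@e_neq0 k i0)).
  move=> a ha; have /matrixP /(_ 0 a) := h1; rewrite !mxE (negbTE ha) /=.
  by move/eqP; rewrite mulf_eq0 (negbTE c0) => /eqP.
Qed.


Lemma sum2_single (V : zmodType) k (F : 'I_k -> 'I_k -> V) (i0 : 'I_k) :
  (forall a b, (a != i0) || (b != i0) -> F a b = 0) ->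
  \sum_a \sum_b F a b = F i0 i0.
Proof.
move=> H; rewrite (bigD1 i0) //= [X in _ + X]big1 => [|a ha].
  rewrite addr0 (bigD1 i0) //= [X in _ + X]big1 ?addr0 // => b hb.
  by apply: H; rewrite hb orbT.
by apply: big1 => b _; apply: H; rewrite ha.
Qed.

Lemma row_neq0_unit n (P : 'M[KK]_n) j : P \in unitmx -> row j P != 0.
Proof.
move=> PU; apply/eqP => h.
have : row j (P *m invmx P) = 0 by rewrite row_mul h mul0mx.
by rewrite mulmxV // row1 => /eqP; rewrite (negbTE (@e_neq0 n j)).
Qed.

Lemma tr_conj n (A : 'M[KK]_n) : \tr (A^t* ) = Num.conj (\tr A).
Proof.
by rewrite /mxtrace rmorph_sum; apply: eq_bigr => i _; rewrite !mxE.
Qed.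

Lemma trB n (A B : 'M[KK]_n) : \tr (A - B) = \tr A - \tr B.
Proof. exact: raddfB. Qed.

Lemma trZ n (c : KK) (A : 'M[KK]_n) : \tr (c *: A) = c * \tr A.
Proof. exact: mxtraceZ. Qed.

Lemma trS n k (F : 'I_k -> 'M[KK]_n) : \tr (\sum_a F a) = \sum_a \tr (F a).
Proof. exact: raddf_sum. Qed.

End Gen.

Section Main.
Variable R : realType.

Local Open Scope sesquilinear_scope.

Lemma real_of_Im0 (x : R[i]) : complex.Im x = 0 -> x = ((complex.Re x)%:C)%C.
Proof. by case: x => a b /= ->. Qed.

Lemma dic n (P : 'M[R[i]]_n) (g : 'I_n -> R[i]) :
  diag_in_coords (map_mx Num.conj P) g = P^t* *m diag_mx (\row_l g l) *m P.
Proof.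
rewrite /diag_in_coords; congr (_ *m _ *m _).
  by apply/matrixP => a b; rewrite !mxE.
by apply/matrixP => a b; rewrite !mxE; exact: conjCK.
Qed.

Lemma form_conjE n (A : 'M[R[i]]_n) : form_conj A = A^t*.
Proof. by apply/matrixP => a b; rewrite !mxE. Qed.

Lemma kahler_pos' n (A : 'M[R[i]]_n) : is_kahler A -> pos A.
Proof.
case=> Q [Qu ->]; rewrite /diag_in_coords diag1 mulmx1.
have -> : map_mx (fun x => x^*%C) Q = map_mx Num.conj Q.
  by apply/matrixP => a b; rewrite !mxE.
move=> w w0; have := @kahler_pos _ _ _ Qu w w0; exact.
Qed.

Lemma congr_herm n k (Cm : 'M[R[i]]_k) (M : formmx R n k) :
  is_hermitian_formmx M ->
  forall i j, form_conj (congr_formmx Cm M j i) = congr_formmx Cm M i j.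
Proof.
move=> hH i j; apply/matrixP => x y.
rewrite /form_conj /congr_formmx !mxE !summxE rmorph_sum.
under eq_bigr => a _ do rewrite summxE rmorph_sum.
under [RHS]eq_bigr => a _ do rewrite summxE.
rewrite exchange_big; apply: eq_bigr => a _; apply: eq_bigr => b _.
rewrite [M a b]hH !mxE rmorphM rmorphM /=.
rewrite conjcK; ring.
Qed.

End Main.

Local Open Scope complex_scope.

Theorem mainTheorem4 (R : realType) (n k : nat) (hk : (2 <= k)%N)
  (M : formmx R n k)
  (hM : griffiths_positive M)
  (h11 : forall i : 'I_k, val i = 0%N -> M i i = omega_form R n) :
  exists (C : 'M[R[i]]_k) (rho : 'I_k -> 'I_k -> form11 R n)
         (P : 'M[R[i]]_n) (b : 'I_n -> R),
    [/\ C \in unitmx,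
        (forall i j : 'I_k,
           congr_formmx C M i j =
             (if i == j then omega_form R n else 0) +
             (if (i <= j)%N then rho i j else form_conj (rho j i))),
        (forall i : 'I_k, val i = 0%N -> rho i i = 0),
        (forall i j : 'I_k, (i <= j)%N -> is_primitive (rho i j)) &
        [/\ P \in unitmx,
            omega_form R n = diag_in_coords P (fun _ => 1),
            (forall i : 'I_k, val i = 1%N ->
               rho i i = diag_in_coords P (fun l => (b l)%:C)),
            \sum_(l < n) b l = 0 &
            (forall l : 'I_n, -1 < b l)]].

Proof.
have [n0|npos] := posnP n.
  subst n.
  exists 1%:M, (fun _ _ => 0), 1%:M, (fun _ => 0); split.
  - by rewrite unitmx1.
  - by move=> i j; apply/matrixP => -[].
  - by [].
  - by move=> i j _; rewrite /is_primitive /wedge_omega_top mxtrace0 mulr0.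
  split.
  - by rewrite unitmx1.
  - by apply/matrixP => -[].
  - by move=> i _; apply/matrixP => -[].
  - by rewrite big_ord0.
  - by case.
have k0 : (0 < k)%N by apply: leq_trans hk.
pose i0 : 'I_k := Ordinal k0.
pose i1 : 'I_k := Ordinal hk.
case: hM => hH hpos.
pose T : 'M[R[i]]_k := \matrix_(a, b) (\tr (M a b) / n%:R).
have nR0 : (n%:R : R[i]) != 0 by rewrite pnatr_eq0 -lt0n.
have trE : forall (th : 'I_k -> R[i]),
    \tr (formmx_eval M th) = \sum_a \sum_b (th a * (th b)^*) * \tr (M a b).
  move=> th; rewrite /formmx_eval raddf_sum; apply: eq_bigr => a _.
  rewrite raddf_sum; apply: eq_bigr => b _; exact: mxtraceZ.
have TH : (T^t*)%sesqui = T.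
  apply/matrixP => a b; rewrite !mxE [M a b]hH form_conjE tr_conj rmorphM /= fmorphV /=.
  by rewrite rmorph_nat.
have TP : pos T.
  move=> w w0.
  have [a0 ha0] : exists a, w 0 a != 0.
    apply/existsP; apply: contraR w0 => /existsPn h; apply/eqP/matrixP => x y.
    by rewrite ord1 mxE; apply/eqP; move: (h y); rewrite negbK.
  have := hpos (fun a => w 0 a) (ex_intro _ a0 ha0).
  move/kahler_pos'/(@pos_tr _ _ _ npos) => htr.
  rewrite mx_expand.
  have -> : \sum_a \sum_b w 0 a * T a b * (w 0 b)^* =
      \tr (formmx_eval M (fun a => w 0 a)) / n%:R.
    rewrite trE mulr_suml; apply: eq_bigr => a _.
    rewrite mulr_suml; apply: eq_bigr => b _; rewrite mxE.
    by ring.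
  by rewrite divr_gt0 // ltr0n.
have [Cm [Cu CTC Crow]] := @chol _ _ T i0 (erefl : val i0 = 0%N) TH TP.
have trC : forall i j, \tr (congr_formmx Cm M i j) = n%:R * (i == j)%:R.
  move=> i j.
  have := congr1 (fun A : 'M[R[i]]_k => A i j) CTC; rewrite mx_expand [RHS]mxE => <-.
  rewrite /congr_formmx trS mulr_sumr; apply: eq_bigr => a _.
  rewrite trS mulr_sumr; apply: eq_bigr => b _; rewrite trZ mxE.
  by field.
have c00 : Cm i0 i0 * (Cm i0 i0)^* = 1.
  have := congr1 (fun A : 'M[R[i]]_k => A i0 i0) CTC; rewrite mx_expand [RHS]mxE eqxx /=.
  rewrite (@sum2_single _ _ _ i0) => [|a b]; last first.
    by case/orP => h; rewrite (Crow _ h) ?mul0r ?rmorph0 ?mulr0.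
  move=> h; rewrite -[RHS]h mxE h11 // /omega_form mxtrace1 divff // mulr1.
  by [].
have C00 : congr_formmx Cm M i0 i0 = 1%:M.
  rewrite /congr_formmx (@sum2_single _ _ _ i0) => [|a b]; last first.
    by case/orP => h; rewrite (Crow _ h) ?mul0r ?rmorph0 ?mulr0 scale0r.
  by rewrite h11 // c00 scale1r.
have Cherm := @congr_herm R n k Cm M hH.
pose rho i j := congr_formmx Cm M i j - (if i == j then omega_form R n else 0).
have rho_prim : forall i j, is_primitive (rho i j).
  move=> i j; rewrite /is_primitive /wedge_omega_top /rho trB trC.
  by case: eqP => _; rewrite ?mxtrace1 ?mxtrace0 ?mulr1 ?mulr0 subrr mulr0.
pose N := congr_formmx Cm M i1 i1.
have NH : (N^t*)%sesqui = N by rewrite -form_conjE Cherm.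
have NP : pos N.
  apply: kahler_pos'.
  have [a0 ha0] : exists a, Cm i1 a != 0.
    apply/existsP; apply: contraR (@row_neq0_unit _ _ Cm i1 Cu) => /existsPn h.
    apply/eqP/matrixP => x y.
    by rewrite ord1 !mxE; apply/eqP; move: (h y); rewrite negbK.
  exact: (hpos (fun a => Cm i1 a) (ex_intro _ a0 ha0)).
have [P [d [PU eN dpos]]] := @spectral_pos _ _ N NH NP.
have dreal : forall l, d 0 l = ((complex.Re (d 0 l))%:C)%C.
  by move=> l; apply: real_of_Im0; apply: ger0_Im; apply: ltW.
have hb : forall l, ((complex.Re (d 0 l) - 1)%:C)%C = d 0 l - 1.
  by move=> l; rewrite [in RHS](dreal l) rmorphB rmorph1.
exists Cm, rho, (map_mx Num.conj P), (fun l => complex.Re (d 0 l) - 1).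
split.
- exact: Cu.
- move=> i j; rewrite /rho; case: leqP => hij; first by rewrite addrC subrK.
  have hne : (i == j) = false.
    by apply/negbTE; rewrite neq_ltn hij orbT.
  by rewrite hne add0r eq_sym hne subr0 Cherm.
- move=> i hi; have -> : i = i0 by apply: val_inj.
  by rewrite /rho eqxx C00 subrr.
- by move=> i j _; apply: rho_prim.
split.
- by rewrite map_unitmx; apply: unitarymx_unit.
- by rewrite dic diag1 mulmx1 unitary_tC.
- move=> i hi; have -> : i = i1 by apply: val_inj.
  rewrite /rho eqxx dic.
  have -> : diag_mx (\row_l ((complex.Re (d 0 l) - 1)%:C)%C) = diag_mx d - 1%:M.
    apply/matrixP => x y; rewrite !mxE; case: eqP => [->|]; rewrite ?mulr1n ?mulr0n ?subr0 //.
  by rewrite mulmxBr mulmxBl mulmx1 unitary_tC // -eN.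
- have trN : \tr N = n%:R by rewrite trC eqxx mulr1.
  have hs : \tr N = \sum_l d 0 l.
    by rewrite eN mxtrace_mulC mulmxA (unitarymxP PU) mul1mx mxtrace_diag.
  have hs2 : \sum_l ((complex.Re (d 0 l) - 1)%:C)%C = 0.
    rewrite (eq_bigr _ (fun l _ => hb l)).
    by rewrite sumrB sumr_const card_ord -hs trN subrr.
  apply: (@complexI R); rewrite rmorph_sum; exact: hs2.
- move=> l.
  have h : (0:R) < complex.Re (d 0 l) by rewrite -ltcR -dreal; exact: dpos l.
  lra.
Qed.
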